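(* Let $\mathbf{k}$ be an algebraically closed field with $\mathrm{char}(\mathbf{k})\neq 2$ and let $E=\bigwedge E_1$ be the exterior algebra of a $5$-dimensional $\mathbf{k}$-vector space $E_1$. Let $U\subseteq E_2$ be a $3$-dimensional subspace such that $\dim_{\mathbf{k}}(U\wedge E_1)\ge 7$. Then $U\subseteq\bigwedge^2W$ for some $3$-dimensional subspace $W\subseteq E_1$ if and only if $U^2=0$, i.e. $u\wedge u'=0$ for all $u,u'\in U$. *)

(* Defs.v *)
From HB Require Import structures.
From mathcomp Require Import all_boot all_order all_algebra.
Set Implicit Arguments. Unset Strict Implicit. Unset Printing Implicit Defensive.
Import Order.TTheory GRing.Theory Num.Theory.
Local Open Scope ring_scope.

(* The exterior algebra of K^n, with standard basis e_0,...,e_{n-1}: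
   an element is the family of its coordinates on the basis monomials
   e_S = e_{i1} /\ ... /\ e_{ip} (i1 < ... < ip), indexed by S : {set 'I_n}. *)
Definition ext (K : fieldType) (n : nat) := {ffun {set 'I_n} -> K^o}.

(* sign of e_A /\ e_B = sgn A B * e_(A u B) for disjoint A, B:
   (-1)^(number of inversions between A and B) *)
Definition ext_sgn (K : fieldType) n (A B : {set 'I_n}) : K :=
  (-1) ^+ #|[set p : 'I_n * 'I_n | [&& p.1 \in A, p.2 \in B & (p.2 < p.1)%N]]|.

Definition wedge (K : fieldType) n (a b : ext K n) : ext K n :=
  [ffun S : {set 'I_n} =>
     \sum_(A : {set 'I_n} | A \subset S)
        ext_sgn K A (S :\: A) * a A * b (S :\: A)].

Definition emon (K : fieldType) n (S : {set 'I_n}) : ext K n :=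
  [ffun T => (T == S)%:R].

Definition grade (K : fieldType) n (p : nat) : {vspace ext K n} :=
  <<[seq emon K X | X <- enum [set X : {set 'I_n} | #|X| == p]]>>%VS.

(* U /\ V := span of all products u /\ v (u in U, v in V); by bilinearity of
   the wedge product, it is spanned by the products of basis vectors. *)
Definition wedgeSp (K : fieldType) n (U V : {vspace ext K n}) : {vspace ext K n} :=
  <<[seq wedge u v | u <- (vbasis U : seq _), v <- (vbasis V : seq _)]>>%VS.

(* Main.v *)
Require Import Defs.
From HB Require Import structures.
From mathcomp Require Import all_boot all_order all_algebra.
From mathcomp Require Import ring zify.
Set Implicit Arguments. Unset Strict Implicit. Unset Printing Implicit Defensive.
Import Order.TTheory GRing.Theory Num.Theory.
Local Open Scope ring_scope.
Lemma arith1 (a b c d : nat) : (a + b = c + d -> c < a -> d = 2 -> b <= 1)%N.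
Proof. lia. Qed.
Lemma arith2 (a b c d : nat) : (a + b = c + d -> a <= 3 -> c = 2 -> d = 2 -> 1 <= b)%N.
Proof. lia. Qed.

Section S.
Variables (K : fieldType) (n : nat).
Local Notation E := (ext K n).
Local Notation sgn := (@ext_sgn K n).
Implicit Types (a b c w : E) (A B C S T : {set 'I_n}).

Lemma extD a b S : (a + b) S = a S + b S. Proof. by rewrite ffunE. Qed.
Lemma extZ (k : K) a S : (k *: a) S = k * a S. Proof. by rewrite ffunE. Qed.
Lemma ext0 S : (0 : E) S = 0. Proof. by rewrite ffunE. Qed.
Lemma extN a S : (- a) S = - a S. Proof. by rewrite ffunE. Qed.
Lemma emonE A S : emon K A S = (S == A)%:R. Proof. by rewrite ffunE. Qed.

Lemma dsjP A B : reflect (forall x, x \in A -> x \notin B) [disjoint A & B].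
Proof.
rewrite disjoints_subset; apply: (iffP subsetP) => h x /h; by rewrite ?inE.
Qed.

Lemma wedgeDl a1 a2 b : wedge (a1 + a2) b = wedge a1 b + wedge a2 b.
Proof.
apply/ffunP => S; rewrite !ffunE -big_split /=; apply: eq_bigr => A _.
by rewrite extD; ring.
Qed.
Lemma wedgeDr a b1 b2 : wedge a (b1 + b2) = wedge a b1 + wedge a b2.
Proof.
apply/ffunP => S; rewrite !ffunE -big_split /=; apply: eq_bigr => A _.
by rewrite extD; ring.
Qed.
Lemma wedgeZl k a b : wedge (k *: a) b = k *: wedge a b.
Proof.
apply/ffunP => S; rewrite extZ !ffunE mulr_sumr; apply: eq_bigr => A _.
by rewrite extZ; ring.
Qed.
Lemma wedgeZr k a b : wedge a (k *: b) = k *: wedge a b.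
Proof.
apply/ffunP => S; rewrite extZ !ffunE mulr_sumr; apply: eq_bigr => A _.
by rewrite extZ; ring.
Qed.
Lemma wedge0l b : wedge 0 b = 0.
Proof. by have := wedgeZl 0 0 b; rewrite !scale0r. Qed.
Lemma wedge0r a : wedge a 0 = 0.
Proof. by have := wedgeZr 0 a 0; rewrite !scale0r. Qed.
Lemma wedgeNl a b : wedge (- a) b = - wedge a b.
Proof. by rewrite -(scaleN1r a) wedgeZl scaleN1r. Qed.
Lemma wedgeNr a b : wedge a (- b) = - wedge a b.
Proof. by rewrite -(scaleN1r b) wedgeZr scaleN1r. Qed.
Lemma wedgeBl a1 a2 b : wedge (a1 - a2) b = wedge a1 b - wedge a2 b.
Proof. by rewrite wedgeDl wedgeNl. Qed.
Lemma wedgeBr a b1 b2 : wedge a (b1 - b2) = wedge a b1 - wedge a b2.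
Proof. by rewrite wedgeDr wedgeNr. Qed.
Lemma wedge_suml I r (P : pred I) (F : I -> E) b :
  wedge (\sum_(i <- r | P i) F i) b = \sum_(i <- r | P i) wedge (F i) b.
Proof. exact: (big_morph (fun a => wedge a b) (fun x y => wedgeDl x y b) (wedge0l b)). Qed.
Lemma wedge_sumr I r (P : pred I) (F : I -> E) a :
  wedge a (\sum_(i <- r | P i) F i) = \sum_(i <- r | P i) wedge a (F i).
Proof. exact: (big_morph (fun b => wedge a b) (wedgeDr a) (wedge0r a)). Qed.

Lemma ext_expand a : a = \sum_A a A *: emon K A.
Proof.
apply/ffunP => S; rewrite sum_ffunE (bigD1 S) //= big1 ?addr0.
  by rewrite extZ emonE eqxx mulr1.
by move=> A hA; rewrite extZ emonE eq_sym (negbTE hA) mulr0.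
Qed.

Definition inv A B := #|[set p : 'I_n * 'I_n | [&& p.1 \in A, p.2 \in B & (p.2 < p.1)%N]]|.
Lemma sgnE A B : sgn A B = (-1) ^+ inv A B. Proof. by []. Qed.

Lemma sgnU_r A B C : [disjoint B & C] -> sgn A (B :|: C) = sgn A B * sgn A C.
Proof.
move/dsjP => hd; rewrite !sgnE /inv -exprD; congr (_ ^+ _).
rewrite (_ : [set p | _] = [set p : 'I_n * 'I_n | [&& p.1 \in A, p.2 \in B & (p.2 < p.1)%N]]
    :|: [set p : 'I_n * 'I_n | [&& p.1 \in A, p.2 \in C & (p.2 < p.1)%N]]).
  rewrite cardsU (_ : _ :&: _ = set0) ?cards0 ?subn0 //.
  apply/setP => -[p q]; rewrite !inE /=.
  case: (boolP (q \in B)) => hq; rewrite ?hq ?(negbTE (hd _ hq)) /= ?andbF ?andFb //.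
apply/setP => -[p q]; rewrite !inE /=.
by case: (p \in A); case: (q \in B); case: (q \in C); case: (q < p)%N.
Qed.

Lemma sgnU_l A B C : [disjoint A & B] -> sgn (A :|: B) C = sgn A C * sgn B C.
Proof.
move/dsjP => hd; rewrite !sgnE /inv -exprD; congr (_ ^+ _).
rewrite (_ : [set p | _] = [set p : 'I_n * 'I_n | [&& p.1 \in A, p.2 \in C & (p.2 < p.1)%N]]
    :|: [set p : 'I_n * 'I_n | [&& p.1 \in B, p.2 \in C & (p.2 < p.1)%N]]).
  rewrite cardsU (_ : _ :&: _ = set0) ?cards0 ?subn0 //.
  apply/setP => -[p q]; rewrite !inE /=.
  case: (boolP (p \in A)) => hp; rewrite ?hp ?(negbTE (hd _ hp)) /= ?andbF ?andFb //.

apply/setP => -[p q]; rewrite !inE /=.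
by case: (p \in A); case: (p \in B); case: (q \in C); case: (q < p)%N.
Qed.

Lemma sgn11 i j : sgn [set i] [set j] = (-1) ^+ (j < i)%N.
Proof.
rewrite sgnE /inv; congr (_ ^+ _).
case: ltnP => h.
  rewrite (_ : [set p | _] = [set (i, j)]) ?cards1 //.
  apply/setP => -[p q]; rewrite !inE /= xpair_eqE.
  by case: eqP => [->|]; case: eqP => [->|] //=; rewrite h.
rewrite (_ : [set p | _] = set0) ?cards0 //.
apply/setP => -[p q]; rewrite !inE /=.
by case: eqP => [->|]; case: eqP => [->|] //=; rewrite ltnNge h.
Qed.

Lemma sgn_sq A B : sgn A B * sgn A B = 1.
Proof. by rewrite sgnE -exprD -signr_odd oddD addbb. Qed.

Lemma sgn_neq0 A B : sgn A B != 0.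
Proof. by rewrite sgnE expf_neq0 // oppr_eq0 oner_eq0. Qed.

Lemma sgn0r A : sgn A set0 = 1.
Proof.
rewrite sgnE /inv (_ : [set p | _] = set0) ?cards0 //.
by apply/setP => -[p q]; rewrite !inE /= andbF.
Qed.

Lemma setUDK A S : A \subset S -> A :|: (S :\: A) = S.
Proof.
move=> hA; apply/setP => x; rewrite !inE; case: (boolP (x \in A)) => h //=.
by rewrite (subsetP hA).
Qed.

Lemma wedge_emon A B : wedge (emon K A) (emon K B) =
  if [disjoint A & B] then sgn A B *: emon K (A :|: B) else 0.
Proof.
apply/ffunP => S; rewrite ffunE.
case hA: (A \subset S).
  rewrite (bigD1 A) //= big1 ?addr0 => [|C /andP[_ hC]]; last first.
    by rewrite emonE (negbTE hC) mulr0 mul0r.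
  rewrite !emonE eqxx mulr1.
  case: eqP => [hSB | hSB].
    have hd : [disjoint A & B].
      by rewrite -hSB; apply/dsjP => x hx; rewrite inE hx.
    rewrite hd extZ emonE -hSB setUDK // eqxx !mulr1.
    by [].
  case: ifP => hd; rewrite ?ext0 ?mulr0 //.
  rewrite extZ emonE; case: eqP => [hS|]; rewrite ?mulr0 //.
  exfalso; apply: hSB; rewrite hS setDUl setDv set0U; apply/setDidPl; by rewrite disjoint_sym.
rewrite big1 => [|C hC]; last first.
  rewrite emonE; case: eqP => [hCA|]; rewrite ?mulr0 ?mul0r //.
  by move: hC; rewrite hCA hA.
case: ifP => hd; rewrite ?ext0 //.
rewrite extZ emonE; case: eqP => [hS|]; rewrite ?mulr0 //.
by move: hA; rewrite hS subsetUl.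
Qed.

Lemma dsj0 A : [disjoint A & set0].
Proof. by apply/dsjP => x _; rewrite inE. Qed.

Lemma wedge_1r w : wedge w (emon K set0) = w.
Proof.
rewrite {1}(ext_expand w) wedge_suml [RHS]ext_expand; apply: eq_bigr => A _.
by rewrite wedgeZl wedge_emon dsj0 sgn0r scale1r setU0.
Qed.

Lemma wedgeA_emon A B C :
  wedge (wedge (emon K A) (emon K B)) (emon K C) =
  wedge (emon K A) (wedge (emon K B) (emon K C)).
Proof.
have dU (X Y Z : {set 'I_n}) : [disjoint X :|: Y & Z] = [disjoint X & Z] && [disjoint Y & Z].
  apply/dsjP/andP => [h|[/dsjP h1 /dsjP h2] x]; last by rewrite inE => /orP[/h1|/h2].
  by split; apply/dsjP => x hx; apply: h; rewrite inE hx ?orbT.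
have dUr (X Y Z : {set 'I_n}) : [disjoint X & Y :|: Z] = [disjoint X & Y] && [disjoint X & Z].
  by rewrite disjoint_sym dU ![[disjoint _ & X]]disjoint_sym.
rewrite !wedge_emon.
case hAB : [disjoint A & B]; case hBC : [disjoint B & C]; case hAC : [disjoint A & C];
  rewrite ?wedge0l ?wedge0r ?wedgeZl ?wedgeZr ?wedge_emon ?dU ?dUr ?hAB ?hBC ?hAC /= ?scaler0 //.
rewrite !scalerA setUA sgnU_l // sgnU_r //; congr (_ *: _); ring.
Qed.

Lemma wedgeA a b c : wedge (wedge a b) c = wedge a (wedge b c).
Proof.
have h2 A B c' : wedge (wedge (emon K A) (emon K B)) c' = wedge (emon K A) (wedge (emon K B) c').
  rewrite (ext_expand c') !wedge_sumr; apply: eq_bigr => C _.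
  by rewrite !wedgeZr wedgeA_emon.
have h3 A b' c' : wedge (wedge (emon K A) b') c' = wedge (emon K A) (wedge b' c').
  rewrite (ext_expand b') wedge_sumr wedge_suml !wedge_suml wedge_sumr; apply: eq_bigr => B _.
  by rewrite wedgeZr !wedgeZl wedgeZr h2.
rewrite (ext_expand a) !wedge_suml; apply: eq_bigr => A _.
by rewrite !wedgeZl h3.
Qed.

Definition deg p w := forall S, #|S| != p -> w S = 0.

Lemma span_ind (X : seq E) (P : E -> Prop) :
  P 0 -> (forall a b, P a -> P b -> P (a + b)) -> (forall k a, P a -> P (k *: a)) ->
  (forall x, x \in X -> P x) -> forall v, v \in <<X>>%VS -> P v.
Proof.
move=> h0 hD hZ hX v hv; rewrite (@coord_span _ _ _ (in_tuple X) v hv).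
apply: (big_ind P h0 hD) => i _; apply: hZ; apply: hX; exact: mem_nth.
Qed.

Lemma gradeP p w : reflect (deg p w) (w \in grade K n p).
Proof.
apply: (iffP idP) => [hw|hw].
  move: w hw; apply: span_ind.
  - by move=> S _; rewrite ext0.
  - by move=> a b ha hb S hS; rewrite extD ha ?hb ?addr0.
  - by move=> k a ha S hS; rewrite extZ ha ?mulr0.
  move=> x /mapP [X]; rewrite mem_enum inE => /eqP hX -> S hS.
  rewrite emonE; case: eqP => // hSX; by rewrite hSX hX eqxx in hS.
rewrite (ext_expand w); apply: memv_suml => A _.
case: (boolP (#|A| == p)) => hA; last by rewrite hw // scale0r mem0v.
apply: memvZ; apply: memv_span; apply/mapP; exists A => //.
by rewrite mem_enum inE.
Qed.

Lemma deg_emon A : deg #|A| (emon K A).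
Proof. by move=> S hS; rewrite emonE; case: eqP => // h; rewrite h eqxx in hS. Qed.

Lemma deg_wedge p q a b : deg p a -> deg q b -> deg (p + q) (wedge a b).
Proof.
move=> ha hb S hS; rewrite ffunE big1 // => A hAS.
case: (boolP (#|A| == p)) => hA; last by rewrite ha // mulr0 mul0r.
rewrite hb ?mulr0 //; apply: contra hS => /eqP hq.
rewrite -(cardsID A S) (setIidPr hAS) (eqP hA) hq.
by [].
Qed.

Lemma set1_neq (i j : 'I_n) : ([set i] == [set j]) = (i == j).
Proof.
apply/eqP/eqP => [h|->] //; exact: set1_inj.
Qed.

Lemma expand1 x : deg 1 x -> x = \sum_i x [set i] *: emon K [set i].
Proof.
move=> hx; apply/ffunP => T; rewrite sum_ffunE.
case: (boolP (#|T| == 1%N)) => [/cards1P [i ->] | hT].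
  rewrite (bigD1 i) //= big1 ?addr0; first by rewrite extZ emonE eqxx mulr1.
  by move=> j hj; rewrite extZ emonE set1_neq eq_sym (negbTE hj) mulr0.
rewrite hx // big1 // => j _; rewrite extZ emonE; case: eqP => h; rewrite ?mulr0 //.
by rewrite h cards1 in hT.
Qed.

Lemma emon_anti (i j : 'I_n) :
  wedge (emon K [set i]) (emon K [set j]) = - wedge (emon K [set j]) (emon K [set i]).
Proof.
rewrite !wedge_emon !disjoints1 !inE eq_sym.
case: eqP => [->|hij]; first by rewrite oppr0.
rewrite !sgn11 setUC -scaleNr; congr (_ *: _).
case: (ltngtP i j) => h; rewrite ?expr0 ?expr1 ?opprK //.
by move/val_inj: h => h; case: hij.
Qed.

Lemma wedge_anti x y : deg 1 x -> deg 1 y -> wedge x y = - wedge y x.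
Proof.
move=> hx hy; rewrite (expand1 hx) (expand1 hy) wedge_suml [wedge (\sum_i _) _]wedge_suml.
under eq_bigr do rewrite wedge_sumr.
under [in RHS]eq_bigr do rewrite wedge_sumr.
rewrite exchange_big -sumrN; apply: eq_bigr => i _; rewrite -sumrN; apply: eq_bigr => j _.
by rewrite !wedgeZl !wedgeZr !scalerA emon_anti scalerN mulrC.
Qed.

Hypothesis h2 : (2%:R : K) != 0.

Lemma wedge_xx x : deg 1 x -> wedge x x = 0.
Proof.
move=> hx; have : wedge x x *+ 2 = 0 by rewrite mulr2n {1}wedge_anti // addNr.
by rewrite -scaler_nat => /eqP; rewrite scaler_eq0 (negbTE h2) => /eqP.
Qed.


Definition iota (f : 'I_n -> K) w : E :=
  [ffun S : {set 'I_n} => \sum_(i | i \notin S) f i * sgn [set i] S * w (i |: S)].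
Definition fapp (f : 'I_n -> K) (x : E) : K := \sum_i f i * x [set i].

Lemma iota_lin f k a b : iota f (k *: a + b) = k *: iota f a + iota f b.
Proof.
apply/ffunP => S; rewrite extD extZ !ffunE mulr_sumr -big_split /=.
by apply: eq_bigr => i _; rewrite extD extZ; ring.
Qed.
Lemma iota0 f : iota f 0 = 0.
Proof. by apply/ffunP => S; rewrite !ffunE big1 // => i _; rewrite ext0 mulr0. Qed.
Lemma iotaD f a b : iota f (a + b) = iota f a + iota f b.
Proof. by have := iota_lin f 1 a b; rewrite !scale1r. Qed.
Lemma iotaZ f k a : iota f (k *: a) = k *: iota f a.
Proof. by have := iota_lin f k a 0; rewrite !addr0 iota0 addr0. Qed.

Lemma deg_iota f p w : deg p.+1 w -> deg p (iota f w).
Proof.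
move=> hw S hS; rewrite ffunE big1 // => i hi.
by rewrite hw ?mulr0 // cardsU1 hi.
Qed.

Lemma wedge_emon1 k w T : (wedge (emon K [set k]) w) T =
  if k \in T then sgn [set k] (T :\ k) * w (T :\ k) else 0.
Proof.
rewrite ffunE; case: ifP => hk.
  rewrite (bigD1 [set k]) ?sub1set //= big1 ?addr0 => [|A /andP[_ hA]].
    by rewrite emonE eqxx mulr1.
  by rewrite emonE (negbTE hA) mulr0 mul0r.
rewrite big1 // => A hA; rewrite emonE; case: eqP => h; rewrite ?mulr0 ?mul0r //.
by move: hA; rewrite h sub1set hk.
Qed.

Lemma wedge1E x w T : deg 1 x ->
  (wedge x w) T = \sum_(k in T) sgn [set k] (T :\ k) * x [set k] * w (T :\ k).
Proof.
move=> hx; rewrite {1}(expand1 hx) wedge_suml sum_ffunE [RHS]big_mkcond /=.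
apply: eq_bigr => k _; rewrite wedgeZl extZ wedge_emon1.
by case: ifP => _; [ring | rewrite mulr0].
Qed.

Lemma iota_wedge1 f x w : deg 1 x ->
  iota f (wedge x w) = fapp f x *: w - wedge x (iota f w).
Proof.
move=> hx; apply/ffunP => S.
rewrite extD extN extZ /fapp.
have eL : (iota f (wedge x w)) S =
   \sum_(i | i \notin S) f i * x [set i] * w S +
   \sum_(i | i \notin S) \sum_(k in S) f i * sgn [set i] S *
        sgn [set k] ((i |: S) :\ k) * x [set k] * w ((i |: S) :\ k).
  rewrite ffunE -big_split /=; apply: eq_bigr => i hi.
  rewrite wedge1E // (bigD1 i) ?setU11 //= setU1K // mulrDr mulr_sumr; congr (_ + _).
    by have := sgn_sq [set i] S; rewrite -[f i * x [set i] * w S]mulr1 => <-; ring.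
  apply: eq_big => [k|k _]; last by ring.
  rewrite !inE; case: (boolP (k == i)) => [/eqP->|] /=; first by rewrite (negbTE hi).
  by move=> _; rewrite andbT.
have eR : (wedge x (iota f w)) S =
   \sum_(k in S) f k * x [set k] * w S +
   \sum_(k in S) \sum_(i | i \notin S) sgn [set k] (S :\ k) * x [set k] *
        (f i * sgn [set i] (S :\ k) * w (i |: (S :\ k))).
  rewrite wedge1E // -big_split; apply: eq_bigr => k hk; rewrite ffunE.
  rewrite (bigD1 k) ?setD11 //= setD1K // mulrDr mulr_sumr; congr (_ + _).
    by have := sgn_sq [set k] (S :\ k); rewrite -[f k * x [set k] * w S]mulr1 => <-; ring.
  apply: eq_bigl => i; rewrite !inE.
  by case: (boolP (i == k)) => [/eqP->|] /=; rewrite ?hk ?andbT.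
have ef : \sum_i f i * x [set i] =
   \sum_(i in S) f i * x [set i] + \sum_(i | i \notin S) f i * x [set i].
  by rewrite (bigID (fun i => i \in S)).
have key : \sum_(i | i \notin S) \sum_(k in S) f i * sgn [set i] S *
        sgn [set k] ((i |: S) :\ k) * x [set k] * w ((i |: S) :\ k) =
   - \sum_(k in S) \sum_(i | i \notin S) sgn [set k] (S :\ k) * x [set k] *
        (f i * sgn [set i] (S :\ k) * w (i |: (S :\ k))).
  rewrite exchange_big -sumrN; apply: eq_bigr => k hk; rewrite -sumrN.
  apply: eq_bigr => i hi.
  have hik : i != k by apply: contraNneq hi => ->.
  have eS : (i |: S) :\ k = i |: (S :\ k).
    apply/setP => t; rewrite !inE; case: (boolP (t == k)) => [/eqP->|] //=.
    by rewrite eq_sym (negbTE hik).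
  have e1 : sgn [set i] S = sgn [set i] [set k] * sgn [set i] (S :\ k).
    by rewrite -sgnU_r ?setD1K // disjoints1 setD11.
  have e2 : sgn [set k] (i |: (S :\ k)) = sgn [set k] [set i] * sgn [set k] (S :\ k).
    by rewrite sgnU_r // disjoints1 !inE (negbTE hi) andbF.
  have e3 : sgn [set i] [set k] * sgn [set k] [set i] = -1.
    rewrite !sgn11; case: (ltngtP i k) => h; rewrite ?expr0 ?expr1 ?mulN1r ?mul1r ?mulr1 //.
    by move: hik; rewrite (ord_inj h) eqxx.
  rewrite eS e1 e2.
  transitivity ((sgn [set i] [set k] * sgn [set k] [set i]) * (f i * sgn [set i] (S :\ k)
     * sgn [set k] (S :\ k) * x [set k] * w (i |: (S :\ k)))); first by ring.
  by rewrite e3; ring.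
rewrite eL eR ef key mulrDl !mulr_suml; ring.
Qed.

Lemma iota_emon0 f : iota f (emon K set0) = 0.
Proof.
apply/ffunP => S; rewrite !ffunE big1 // => i _; rewrite emonE.
case: eqP => h; rewrite ?mulr0 //.
by have := setU11 i S; rewrite h inE.
Qed.

Lemma iota1 f x : deg 1 x -> iota f x = fapp f x *: emon K set0.
Proof.
move=> hx; have := iota_wedge1 f (emon K set0) hx.
by rewrite wedge_1r iota_emon0 wedge0r subr0.
Qed.

Lemma iota_wedge2 f x y w : deg 1 x -> deg 1 y ->
  iota f (wedge (wedge x y) w) = wedge (iota f (wedge x y)) w + wedge (wedge x y) (iota f w).
Proof.
move=> hx hy.
rewrite wedgeA !iota_wedge1 // (iota1 f hy) wedgeBr wedgeZr wedgeZr wedge_1r.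
rewrite wedgeBl !wedgeZl wedgeA.
by rewrite opprD opprK addrA.
Qed.

Lemma deg2_ind (F G : E -> E) :
  (forall k a b, F (k *: a + b) = k *: F a + F b) ->
  (forall k a b, G (k *: a + b) = k *: G a + G b) ->
  (forall x y, deg 1 x -> deg 1 y -> F (wedge x y) = G (wedge x y)) ->
  forall u, deg 2 u -> F u = G u.
Proof.
move=> hF hG hFG u hu.
have F0 : F 0 = 0.
  apply: (addrI (F 0)); rewrite addr0; have := hF 1 0 0; rewrite !scale1r !addr0 => h.
  by rewrite -h.
have G0 : G 0 = 0.
  apply: (addrI (G 0)); rewrite addr0; have := hG 1 0 0; rewrite !scale1r !addr0 => h.
  by rewrite -h.
have FD a b : F (a + b) = F a + F b by have := hF 1 a b; rewrite !scale1r.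
have GD a b : G (a + b) = G a + G b by have := hG 1 a b; rewrite !scale1r.
have FZ k a : F (k *: a) = k *: F a by have := hF k a 0; rewrite !addr0 F0 addr0.
have GZ k a : G (k *: a) = k *: G a by have := hG k a 0; rewrite !addr0 G0 addr0.
rewrite (ext_expand u) (big_morph F FD F0) (big_morph G GD G0).
apply: eq_bigr => A _; rewrite FZ GZ.
case: (boolP (#|A| == 2%N)) => hA; last by rewrite hu // !scale0r.
case/cards2P: hA => i [j [hij ->]].
have e : emon K [set i; j] = sgn [set i] [set j] *: wedge (emon K [set i]) (emon K [set j]).
  by rewrite wedge_emon disjoints1 inE hij scalerA sgn_sq scale1r.
have d1 t : deg 1 (emon K [set t]) by have := deg_emon (A := [set t]); rewrite cards1.
by rewrite e FZ GZ hFG ?d1.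
Qed.

Lemma iota_wedgeE2 f u w : deg 2 u ->
  iota f (wedge u w) = wedge (iota f u) w + wedge u (iota f w).
Proof.
apply: (deg2_ind (F := fun u => iota f (wedge u w))
                 (G := fun u => wedge (iota f u) w + wedge u (iota f w))).
- by move=> k a b; rewrite wedgeDl wedgeZl iota_lin.
- move=> k a b; rewrite iota_lin !wedgeDl !wedgeZl.
  by rewrite scalerDr !addrA; congr (_ + _); rewrite -!addrA; congr (_ + _); rewrite addrC.
- by move=> x y hx hy; apply: iota_wedge2.
Qed.

Lemma wedge_comm12 u a : deg 2 u -> deg 1 a -> wedge u a = wedge a u.
Proof.
move=> hu ha; move: u hu.
apply: (deg2_ind (F := fun u => wedge u a) (G := fun u => wedge a u)).
- by move=> k b c; rewrite wedgeDl wedgeZl.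
- by move=> k b c; rewrite wedgeDr wedgeZr.
move=> x y hx hy.
rewrite wedgeA (wedge_anti hy ha) wedgeNr -wedgeA (wedge_anti hx ha) wedgeNl opprK.
by rewrite wedgeA.
Qed.


Lemma deg0 p : deg p (0 : E).
Proof. by move=> S _; rewrite ext0. Qed.

Lemma decomp u : deg 2 u -> wedge u u = 0 ->
  exists a b, [/\ deg 1 a, deg 1 b & u = wedge a b].
Proof.
move=> hu huu; case: (eqVneq u 0) => [->|hu0].
  by exists 0, 0; rewrite wedge0l; split => //; apply: deg0.
have [S hS] : exists S, u S != 0.
  apply/existsP; apply: contraR hu0 => /existsPn h; apply/eqP/ffunP => S.
  by rewrite ext0; apply/eqP; move: (h S); rewrite negbK.
have h2S : #|S| == 2%N by apply: contraR hS => h; rewrite hu // eqxx.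
case/cards2P: h2S => i [j [hij hSe]].
pose f := fun k : 'I_n => (k == i)%:R : K.
pose a := iota f u.
have ha : deg 1 a by apply: deg_iota.
have haj : a [set j] = sgn [set i] [set j] * u S.
  rewrite /a ffunE (bigD1 i) ?inE //= big1 ?addr0.
    by rewrite /f eqxx mul1r hSe.
  by move=> k /andP[_ hk]; rewrite /f (negbTE hk) !mul0r.
have ha0 : a [set j] != 0 by rewrite haj mulf_neq0 // sgn_neq0.
have hau : wedge a u = 0.
  have := iota_wedgeE2 f u hu; rewrite huu iota0 -/a (wedge_comm12 hu ha) => /esym/eqP.
  by rewrite -mulr2n -scaler_nat scaler_eq0 (negbTE h2) /= => /eqP.
pose g := fun k : 'I_n => (k == j)%:R / a [set j].
have hga : fapp g a = 1.
  rewrite /fapp (bigD1 j) //= big1 ?addr0.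
    by rewrite /g eqxx mul1r mulVf.
  by move=> k hk; rewrite /g (negbTE hk) mul0r mul0r.
exists a, (iota g u); split => //; first by apply: deg_iota.
have := iota_wedge1 g u ha; rewrite hau iota0 hga scale1r => /eqP.
by rewrite eq_sym subr_eq0 => /eqP.
Qed.

Definition wlist (s : seq E) := foldr (@wedge K n) (emon K set0) s.

Lemma iota_wlist f s : (forall x, x \in s -> deg 1 x) ->
  (forall x, x \in s -> fapp f x = 0) -> iota f (wlist s) = 0.
Proof.
elim: s => [|x s IH] hd hf /=; first exact: iota_emon0.
rewrite iota_wedge1; last by apply: hd; rewrite mem_head.
rewrite hf ?mem_head // scale0r IH ?wedge0r ?subr0 //.
- by move=> y hy; apply: hd; rewrite inE hy orbT.
- by move=> y hy; apply: hf; rewrite inE hy orbT.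
Qed.

Lemma fapp_coord m (X : m.-tuple E) j x : deg 1 x ->
  fapp (fun i => coord X j (emon K [set i])) x = coord X j x.
Proof.
move=> hx; rewrite [in RHS](expand1 hx) linear_sum; apply: eq_bigr => i _.
by rewrite linearZ /= mulrC.
Qed.

Lemma emon0_neq0 : emon K (set0 : {set 'I_n}) != 0.
Proof.
apply/eqP => h; have := congr1 (fun w : E => w set0) h.
by rewrite emonE eqxx ext0 => /eqP; rewrite oner_eq0.
Qed.

Lemma wlist_free s : (forall x, x \in s -> deg 1 x) -> free s -> wlist s != 0.
Proof.
elim: s => [|x s IH] hd; first by move=> _; apply: emon0_neq0.
rewrite free_cons => /andP[hxs hfs] /=.
have hds : forall y, y \in s -> deg 1 y by move=> y hy; apply: hd; rewrite inE hy orbT.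
have hW := IH hds hfs.
have hX : free (in_tuple (x :: s)) by rewrite free_cons hxs hfs.
pose f := fun i => coord (in_tuple (x :: s)) ord0 (emon K [set i]).
have hfx : fapp f x = 1.
  rewrite fapp_coord; last by apply: hd; rewrite mem_head.
  by have := coord_free ord0 ord0 hX.
have hfs0 : forall y, y \in s -> fapp f y = 0.
  move=> y hy; rewrite fapp_coord; last exact: hds.
  case/(nthP 0): hy => k hk <-.
  have := coord_free (lift ord0 (Ordinal hk)) ord0 hX.
  by rewrite /=.
apply: contra hW => /eqP h0.
have := iota_wedge1 f (wlist s) (hd x (mem_head _ _)).
by rewrite h0 iota0 hfx scale1r iota_wlist // wedge0r subr0 => <-.
Qed.


Local Notation E1 := (grade K n 1).

Lemma span_wedge_r w (X : seq E) (Z : {vspace E}) :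
  (forall x, x \in X -> wedge w x \in Z) -> forall z, z \in <<X>>%VS -> wedge w z \in Z.
Proof.
move=> hX; apply: span_ind => //.
- by rewrite wedge0r mem0v.
- by move=> a b ha hb; rewrite wedgeDr memvD.
- by move=> k a ha; rewrite wedgeZr memvZ.
Qed.

Lemma span_wedge_l w (X : seq E) (Z : {vspace E}) :
  (forall x, x \in X -> wedge x w \in Z) -> forall z, z \in <<X>>%VS -> wedge z w \in Z.
Proof.
move=> hX; apply: span_ind => //.
- by rewrite wedge0l mem0v.
- by move=> a b ha hb; rewrite wedgeDl memvD.
- by move=> k a ha; rewrite wedgeZl memvZ.
Qed.

Lemma memv_wedgeSp (U V : {vspace E}) x y :
  x \in U -> y \in V -> wedge x y \in wedgeSp U V.
Proof.
move=> hx hy.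
have hx' : x \in <<vbasis U>>%VS by rewrite (span_basis (vbasisP U)).
have hy' : y \in <<vbasis V>>%VS by rewrite (span_basis (vbasisP V)).
move: x {hx} hx'; apply: span_wedge_l => x hx; move: y {hy} hy'; apply: span_wedge_r => y hy.
by apply: memv_span; apply: allpairs_f.
Qed.

Lemma wedgeSp_sub (U V Z : {vspace E}) :
  (forall x y, x \in U -> y \in V -> wedge x y \in Z) -> (wedgeSp U V <= Z)%VS.
Proof.
move=> h; apply/span_subvP => z /allpairsP [[x y] [/= hx hy ->]].
by apply: h; apply: vbasis_mem.
Qed.

Lemma span2P (a b z : E) : z \in <<[:: a; b]>>%VS -> exists al be, z = al *: a + be *: b.
Proof.
rewrite span_cons span_seq1 => /memv_addP [z1 /vlineP [al ->] [z2 /vlineP [be ->] ->]].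
by exists al, be.
Qed.

Lemma E1deg x : x \in E1 -> deg 1 x.
Proof. by move/gradeP. Qed.

Lemma wedge2_span (a b x y : E) : a \in E1 -> b \in E1 ->
  x \in <<[:: a; b]>>%VS -> y \in <<[:: a; b]>>%VS -> wedge x y \in <[wedge a b]>%VS.
Proof.
move=> /E1deg ha /E1deg hb /span2P [al [be ->]] /span2P [ga [de ->]].
rewrite !wedgeDl !wedgeDr !wedgeZl !wedgeZr !wedge_xx // (wedge_anti hb ha).
rewrite !scaler0 add0r addr0 scalerN !scalerA.
by apply: memvD; apply: memvZ; rewrite ?memvN; [exact: memv_line | apply: memvZ; exact: memv_line].
Qed.

Lemma line_factor (a b v : E) : a \in E1 -> b \in E1 ->
  v \in <<[:: a; b]>>%VS -> v != 0 -> exists c, c \in E1 /\ wedge a b = wedge v c.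
Proof.
move=> ha hb /span2P [al [be hv]] hv0.
case: (eqVneq al 0) => [hal | hal].
  have hbe : be != 0 by apply: contraNneq hv0 => hbe; rewrite hv hal hbe !scale0r addr0.
  exists (- be^-1 *: a); split; first by rewrite memvZ.
  rewrite hv hal scale0r add0r wedgeZl wedgeZr scalerA (wedge_anti (E1deg hb) (E1deg ha)).
  by rewrite scalerN -scaleNr mulrN mulfV // opprK scale1r.
exists (al^-1 *: b); split; first by rewrite memvZ.
rewrite hv wedgeDl !wedgeZl !wedgeZr (wedge_xx (E1deg hb)) !scaler0 addr0 scalerA.
by rewrite mulfV // scale1r.
Qed.

Lemma free2 (a b : E) : a \in E1 -> b \in E1 -> wedge a b != 0 -> free [:: a; b].
Proof.
move=> ha hb hab; rewrite free_cons seq1_free span_seq1; apply/andP; split.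
  apply: contra hab => /vlineP [k ->]; by rewrite wedgeZl (wedge_xx (E1deg hb)) scaler0.
by apply: contraNneq hab => ->; rewrite wedge0r.
Qed.

Lemma dim4 (a b c d : E) : a \in E1 -> b \in E1 -> c \in E1 -> d \in E1 ->
  wedge (wedge a b) (wedge c d) = 0 -> (\dim <<[:: a; b; c; d]>> <= 3)%N.
Proof.
move=> ha hb hc hd h0; rewrite leqNgt; apply/negP => hlt.
have hf : free [:: a; b; c; d].
  by rewrite /free eqn_leq dim_span hlt.
have hdeg : forall x, x \in [:: a; b; c; d] -> deg 1 x.
  by move=> x; rewrite !inE => /or4P [] /eqP ->; apply: E1deg.
by have := wlist_free hdeg hf; rewrite /wlist /= wedge_1r -wedgeA h0 eqxx.
Qed.


Lemma core (a0 b0 a1 b1 a2 b2 : E) :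
  a0 \in E1 -> b0 \in E1 -> a1 \in E1 -> b1 \in E1 -> a2 \in E1 -> b2 \in E1 ->
  free [:: wedge a0 b0; wedge a1 b1; wedge a2 b2] ->
  wedge (wedge a0 b0) (wedge a1 b1) = 0 ->
  wedge (wedge a0 b0) (wedge a2 b2) = 0 ->
  wedge (wedge a1 b1) (wedge a2 b2) = 0 ->
  (exists W : {vspace E}, [/\ (W <= E1)%VS, \dim W = 3 &
      (<<[:: wedge a0 b0; wedge a1 b1; wedge a2 b2]>> <= wedgeSp W W)%VS])
  \/ (exists v c0 c1 c2, [/\ v \in E1, v != 0, [/\ c0 \in E1, c1 \in E1 & c2 \in E1] &
      [/\ wedge a0 b0 = wedge v c0, wedge a1 b1 = wedge v c1 & wedge a2 b2 = wedge v c2]]).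
Proof.
move=> ha0 hb0 ha1 hb1 ha2 hb2 hfr h01 h02 h12.
have hu0 : wedge a0 b0 != 0 by apply: (free_not0 hfr); rewrite !inE eqxx ?orbT.
have hu1 : wedge a1 b1 != 0 by apply: (free_not0 hfr); rewrite !inE eqxx ?orbT.
have hu2 : wedge a2 b2 != 0 by apply: (free_not0 hfr); rewrite !inE eqxx ?orbT.
pose P0 := <<[:: a0; b0]>>%VS.
pose P1 := <<[:: a1; b1]>>%VS.
pose P2 := <<[:: a2; b2]>>%VS.
have dP0 : \dim P0 = 2 by have := free2 ha0 hb0 hu0; rewrite /free => /eqP.
have dP1 : \dim P1 = 2 by have := free2 ha1 hb1 hu1; rewrite /free => /eqP.
have dP2 : \dim P2 = 2 by have := free2 ha2 hb2 hu2; rewrite /free => /eqP.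
have d01 : (\dim (P0 + P1) <= 3)%N by rewrite -span_cat; apply: dim4.
have d02 : (\dim (P0 + P2) <= 3)%N by rewrite -span_cat; apply: dim4.
have d12 : (\dim (P1 + P2) <= 3)%N by rewrite -span_cat; apply: dim4.
have PE (a b : E) : a \in E1 -> b \in E1 -> (<<[:: a; b]>> <= E1)%VS.
  by move=> ha hb; apply/span_subvP => x; rewrite !inE => /orP [] /eqP ->.
have aP (a b : E) : a \in <<[:: a; b]>>%VS by apply: memv_span; rewrite !inE eqxx.
have bP (a b : E) : b \in <<[:: a; b]>>%VS by apply: memv_span; rewrite !inE eqxx orbT.
move: (free_cons (wedge a0 b0) [:: wedge a1 b1; wedge a2 b2]); rewrite hfr => /esym/andP[hn0 _].
pose Q := (P0 + P1)%VS.
case: (boolP (P2 <= Q)%VS) => hPQ.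
  left; exists Q; split.
  - by rewrite subv_add !PE.
  - apply/eqP; rewrite eqn_leq d01 /= leqNgt; apply/negP => hlt.
    have hQ : P1 == Q by rewrite eqEdim addvSr dP1 -ltnS.
    have hP0 : (P0 <= P1)%VS by rewrite (eqP hQ) addvSl.
    have := wedge2_span ha1 hb1 (subvP hP0 _ (aP a0 b0)) (subvP hP0 _ (bP a0 b0)).
    move=> hin; move: hn0; rewrite span_cons span_seq1.
    by rewrite (subvP (addvSl _ _) _ hin).
  apply/span_subvP => x; rewrite !inE => /or3P [] /eqP ->; apply: memv_wedgeSp.
  - exact: (subvP (addvSl _ _) _ (aP a0 b0)).
  - exact: (subvP (addvSl _ _) _ (bP a0 b0)).
  - exact: (subvP (addvSr _ _) _ (aP a1 b1)).
  - exact: (subvP (addvSr _ _) _ (bP a1 b1)).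
  - exact: (subvP hPQ _ (aP a2 b2)).
  - exact: (subvP hPQ _ (bP a2 b2)).
right.
have hQ2 : (\dim (Q :&: P2) <= 1)%N.
  apply: (arith1 (dimv_sum_cap Q P2)) dP2.
  rewrite (ltn_leqif (dimv_leqif_eq (addvSl Q P2))).
  by apply: contra hPQ => /eqP ->; apply: addvSr.
have hc0 : (1 <= \dim (P0 :&: P2))%N by apply: (arith2 (dimv_sum_cap P0 P2)).
have hc1 : (1 <= \dim (P1 :&: P2))%N by apply: (arith2 (dimv_sum_cap P1 P2)).
have e0 : (P0 :&: P2 = Q :&: P2)%VS.
  apply/eqP; rewrite eqEdim capvS ?addvSl //=; exact: leq_trans hQ2 hc0.
have e1 : (P1 :&: P2 = Q :&: P2)%VS.
  apply/eqP; rewrite eqEdim capvS ?addvSr //=; exact: leq_trans hQ2 hc1.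
pose v := vpick (Q :&: P2).
have hv0 : v != 0 by rewrite vpick0 -dimv_eq0 -e0 -lt0n.
have hvQ : v \in (Q :&: P2)%VS := memv_pick _.
have /memv_capP [hv0' hv2] : v \in (P0 :&: P2)%VS by rewrite e0.
have /memv_capP [hv1 _] : v \in (P1 :&: P2)%VS by rewrite e1.
have [c0 [hc0E e0']] := line_factor ha0 hb0 hv0' hv0.
have [c1 [hc1E e1']] := line_factor ha1 hb1 hv1 hv0.
have [c2 [hc2E e2']] := line_factor ha2 hb2 hv2 hv0.
exists v, c0, c1, c2; split => //.
exact: (subvP (PE _ _ ha0 hb0)).
Qed.

End S.

Section T.
Variables (K : fieldType) (h2 : (2%:R : K) != 0).
Local Notation E := (ext K 5).
Local Notation E1 := (grade K 5 1).

Lemma dimE1 : (\dim E1 <= 5)%N.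
Proof.
apply: leq_trans (dim_span _) _.
by rewrite size_map -cardE card_draws card_ord bin1.
Qed.

Lemma xx0 (x w : E) : deg 1 x -> wedge x (wedge x w) = 0.
Proof. by move=> hx; rewrite -wedgeA wedge_xx // wedge0l. Qed.

Lemma swap1 (x y w : E) : deg 1 x -> deg 1 y ->
  wedge x (wedge y w) = - wedge y (wedge x w).
Proof.
by move=> hx hy; rewrite -!wedgeA (wedge_anti hx hy) wedgeNl.
Qed.

Lemma rep (x y z t : E) : deg 1 x -> deg 1 y -> deg 1 z -> deg 1 t ->
  [|| x == y, x == z, x == t, y == z, y == t | z == t] ->
  wedge (wedge x y) (wedge z t) = 0.
Proof.
move=> hx hy hz ht; rewrite wedgeA.
case/or4P => [/eqP<-|/eqP<-|/eqP<-|/orP[/eqP<-|/orP[/eqP<-|/eqP<-]]].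
- by rewrite xx0.
- by rewrite (swap1 _ hy hx) wedgeNr xx0 // oppr0.
- by rewrite (wedge_anti hz hx) !wedgeNr (swap1 _ hy hx) wedgeNr xx0 // !oppr0.
- by rewrite xx0 // wedge0r.
- by rewrite (wedge_anti hz hy) wedgeNr xx0 // oppr0 wedge0r.
- by rewrite (wedge_xx h2 hz) !wedge0r.
Qed.

Lemma forward (U W : {vspace E}) : (W <= E1)%VS -> \dim W = 3 -> (U <= wedgeSp W W)%VS ->
  forall u u', u \in U -> u' \in U -> wedge u u' = 0.
Proof.
move=> hW1 hdW hUW u u' hu hu'.
have hs : size (vbasis W) = 3 by rewrite size_tuple hdW.
have hdb : forall x, x \in (vbasis W : seq E) -> deg 1 x.
  by move=> x hx; apply/gradeP; apply: (subvP hW1); apply: vbasis_mem.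
have key : forall x y z t, x \in (vbasis W : seq E) -> y \in (vbasis W : seq E) ->
    z \in (vbasis W : seq E) -> t \in (vbasis W : seq E) -> wedge (wedge x y) (wedge z t) = 0.
  move: hdb hs; case: (tval (vbasis W)) => [|w0 [|w1 [|w2 [|? ?]]]] //= hdb _.
  move=> x y z t hx hy hz ht; apply: rep; try by apply: hdb.
  move: hx hy hz ht; rewrite !inE.
  by do 4 (case/or3P => /eqP->); rewrite !eqxx ?orbT.
apply/eqP; rewrite -memv0.
have hu1 := subvP hUW _ hu; have hu1' := subvP hUW _ hu'.
move: u hu1 {hu}; apply: span_wedge_l => z /allpairsP [[x y] [/= hx hy ->]].
move: u' hu1' {hu'}; apply: span_wedge_r => z' /allpairsP [[x' y'] [/= hx' hy' ->]].
by rewrite key // memv0.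
Qed.


Lemma bound6 (U : {vspace E}) (v c0 c1 c2 : E) :
  v \in E1 -> v != 0 -> c0 \in E1 -> c1 \in E1 -> c2 \in E1 ->
  free [:: wedge v c0; wedge v c1; wedge v c2] ->
  <<[:: wedge v c0; wedge v c1; wedge v c2]>>%VS = U ->
  (\dim (wedgeSp U E1) <= 6)%N.
Proof.
move=> hv hv0 hc0 hc1 hc2 hfr hspan.
move: hfr; rewrite free_cons => /andP [hn0]; rewrite free_cons => /andP [hn1].
rewrite seq1_free => hn2.
have hvd := E1deg hv.
have hvv : wedge v v = 0 by apply: wedge_xx.
have hfc : free [:: c0; c1; c2; v].
  rewrite free_cons; apply/andP; split.
    apply: contra hn0 => hc; apply: (span_wedge_r _ hc) => x; rewrite !inE.
    case/or3P => /eqP->; rewrite ?hvv ?mem0v //; apply: memv_span; rewrite !inE eqxx ?orbT //.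
  rewrite free_cons; apply/andP; split.
    apply: contra hn1 => hc; apply: (span_wedge_r _ hc) => x; rewrite !inE.
    case/orP => /eqP->; rewrite ?hvv ?mem0v //; apply: memv_span; rewrite !inE eqxx ?orbT //.
  rewrite free_cons seq1_free hv0 andbT; apply/negP => hc.
  have hz : wedge v c2 \in (0 : {vspace E})%VS.
    by apply: (span_wedge_r _ hc) => x; rewrite inE => /eqP->; rewrite hvv mem0v.
  by move: hz; rewrite memv0 (negbTE hn2).
have dC : \dim <<[:: c0; c1; c2; v]>> = 4 by move: hfc; rewrite /free => /eqP.
have [d [hd hsub]] : exists d, d \in E1 /\ (E1 <= <<[:: d; c0; c1; c2; v]>>)%VS.
  case: (boolP (E1 <= <<[:: c0; c1; c2; v]>>)%VS) => hC.
    exists 0; split; first exact: mem0v.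
    by apply: subv_trans hC _; rewrite (span_cons 0); apply: addvSr.
  case/subvPn: hC => d hd hdC; exists d; split => //.
  have hfd : free [:: d; c0; c1; c2; v] by rewrite free_cons hdC hfc.
  have hDE : (<<[:: d; c0; c1; c2; v]>> <= E1)%VS.
    apply/span_subvP => x; rewrite !inE.
    by case/orP => [/eqP->|]; [|case/or4P => /eqP->].
  have : (<<[:: d; c0; c1; c2; v]>> == E1)%VS.
    rewrite eqEdim hDE /=; move: hfd; rewrite /free => /eqP ->.
    exact: dimE1.
  by move/eqP->.
have Z1 c : c \in E1 -> wedge (wedge v c) v = 0.
  move=> hc; rewrite wedgeA (wedge_anti (E1deg hc) hvd) wedgeNr -wedgeA hvv.
  by rewrite wedge0l oppr0.
have Z2 c : c \in E1 -> wedge (wedge v c) c = 0.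
  by move=> hc; rewrite wedgeA (wedge_xx h2 (E1deg hc)) wedge0r.
have Z3 c c' : c \in E1 -> c' \in E1 -> wedge (wedge v c) c' = - wedge (wedge v c') c.
  move=> hc hc'; rewrite !wedgeA (wedge_anti (E1deg hc) (E1deg hc')) wedgeNr.
  by [].
pose Y := [:: wedge (wedge v c0) c1; wedge (wedge v c0) c2; wedge (wedge v c1) c2;
              wedge (wedge v c0) d; wedge (wedge v c1) d; wedge (wedge v c2) d].
have hincl : (wedgeSp U E1 <= <<Y>>)%VS.
  apply: wedgeSp_sub => x y hx hy.
  rewrite -hspan in hx; move: x hx; apply: span_wedge_l => x hx.
  have hy' := subvP hsub _ hy; move: y {hy} hy'; apply: span_wedge_r => y hy'.
  move: hx hy'; rewrite !inE => hx.
  case/orP => [/eqP->|/orP[/eqP->|/orP[/eqP->|/orP[/eqP->|/eqP->]]]];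
  case/or3P: hx => /eqP->;
  first [ by rewrite ?(Z1 _ hc0) ?(Z1 _ hc1) ?(Z1 _ hc2) ?(Z2 _ hc0) ?(Z2 _ hc1) ?(Z2 _ hc2) mem0v
        | by apply: memv_span; rewrite !inE eqxx ?orbT
        | by rewrite Z3 // memvN; apply: memv_span; rewrite !inE eqxx ?orbT ].
apply: leq_trans (dimvS hincl) _.
exact: dim_span.
Qed.

End T.

Unset Implicit Arguments.

Theorem lemma5p4 (K : closedFieldType) (hK : (2 \notin [pchar K])%N)
  (U : {vspace ext K 5})
  (hU2 : (U <= grade K 5 2)%VS) (hdimU : \dim U = 3%N)
  (hUE1 : (7 <= \dim (wedgeSp U (grade K 5 1)))%N) :
  (exists W : {vspace ext K 5},
      [/\ (W <= grade K 5 1)%VS, \dim W = 3%N & (U <= wedgeSp W W)%VS])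
  <-> (forall u u', u \in U -> u' \in U -> wedge u u' = 0).
Proof.
have h2 : (2%:R : K) != 0.
  by apply: contraNneq hK => h; rewrite inE /= h eqxx.
split.
  by case=> W [hW1 hdW hUW]; apply: (forward h2 hW1 hdW hUW).
move=> H.
have [u0 [u1 [u2 [hsp hfr]]]] : exists u0 u1 u2 : ext K 5,
    <<[:: u0; u1; u2]>>%VS = U /\ free [:: u0; u1; u2].
  have hb := vbasisP U.
  have hs : size (vbasis U) = 3 by rewrite size_tuple hdimU.
  move: hb hs; case: (tval (vbasis U)) => [|x0 [|x1 [|x2 [|? ?]]]] //= hb _.
  by exists x0, x1, x2; split; [apply: span_basis hb | apply: basis_free hb].
have hmem x : x \in [:: u0; u1; u2] -> x \in U by move=> hx; rewrite -hsp memv_span.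
have hd2 x : x \in [:: u0; u1; u2] -> deg 2 x.
  by move=> hx; apply/gradeP; apply: (subvP hU2); apply: hmem.
have m0 : u0 \in [:: u0; u1; u2] by rewrite !inE eqxx.
have m1 : u1 \in [:: u0; u1; u2] by rewrite !inE eqxx ?orbT.
have m2 : u2 \in [:: u0; u1; u2] by rewrite !inE eqxx ?orbT.
have [a0 [b0 [ha0 hb0 e0]]] := decomp h2 (hd2 _ m0) (H _ _ (hmem _ m0) (hmem _ m0)).
have [a1 [b1 [ha1 hb1 e1]]] := decomp h2 (hd2 _ m1) (H _ _ (hmem _ m1) (hmem _ m1)).
have [a2 [b2 [ha2 hb2 e2]]] := decomp h2 (hd2 _ m2) (H _ _ (hmem _ m2) (hmem _ m2)).
have h01 := H _ _ (hmem _ m0) (hmem _ m1).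
have h02 := H _ _ (hmem _ m0) (hmem _ m2).
have h12 := H _ _ (hmem _ m1) (hmem _ m2).
rewrite e0 e1 e2 in hsp hfr h01 h02 h12.
have gE (x : ext K 5) : deg 1 x -> x \in grade K 5 1 by move/gradeP.
case: (core h2 (gE _ ha0) (gE _ hb0) (gE _ ha1) (gE _ hb1) (gE _ ha2) (gE _ hb2) hfr h01 h02 h12).
  by case=> W [hW1 hdW hUW]; exists W; split => //; rewrite -hsp.
case=> v [c0 [c1 [c2 [hv hv0 [hc0 hc1 hc2] [f0 f1 f2]]]]].
rewrite f0 f1 f2 in hsp hfr.
have := bound6 h2 hv hv0 hc0 hc1 hc2 hfr hsp.
by move=> h6; have := leq_trans hUE1 h6.
Qed.
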